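(* Let $R=DV$ be any decomposition of the boundary matrix of the cone filtration, and let $\omega*\sigma,\omega*\tau$ (with $\sigma,\tau\in K$) form a persistence pair, i.e. $\operatorname{low}R[\omega*\tau]=\omega*\sigma$; set $d=\max\sigma$ and $b=\max\tau$ (so $d>b$). Let $\gamma$ be the restriction of $V[\omega*\tau]$ to cone simplices and let $z=(\partial\gamma)\cap K$ be the restriction of $\partial\gamma$ to base simplices. Then $z$ is supported in $K_{\ge b}$, $\partial z$ is supported in $K_{\ge d}$ (so $[z]\in H(K_{\ge b},K_{\ge d})$), $\tau\in z$, and $\sigma\in\partial z$.
   Context: Coefficients are in a field $\mathbb F$. Let $K$ be a finite $\Delta$-complex in which every simplex $\sigma$ carries an integer interval $T(\sigma)=[\min\sigma,\max\sigma]$ with $\min\sigma<\max\sigma$, such that whenever $\sigma$ is a proper face of $\tau$, $\min\sigma<\min\tau<\max\tau<\max\sigma$; assume the values $\min\sigma$ ($\sigma\in K$) are pairwise distinct and the values $\max\sigma$ are pairwise distinct. Write $K_{\le i}=\{\sigma:\min\sigma\le i\}$, $K_{\ge j}=\{\sigma:\max\sigma\ge j\}$ (subcomplexes), and $K[b,d]=K_{\ge b}\cap K_{\le d}$. The cone $\omega*K$ consists of the simplices of $K$ (''base simplices''), a new vertex $\omega$, and simplices $\omega*\sigma$ for $\sigma\in K$ (''cone simplices''), with $\partial(\omega*\sigma)=\sigma-\omega*\partial\sigma$ (for a vertex $v$, $\partial(\omega*v)=v-\omega$). The cone filtration orders base simplices by increasing $\min$, then $\omega$, then the simplices $\omega*\sigma$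 by decreasing $\max\sigma$. $D$ is the boundary matrix of $\omega*K$ with rows and columns in this order; $R=DV$ denotes a decomposition with $V$ invertible upper-triangular and $R$ reduced (pivots $\operatorname{low}$ — lowest nonzero entries — of nonzero columns in distinct rows). ''$\sigma\in c$'' means the coefficient of $\sigma$ in chain $c$ is nonzero; a chain is supported in a subcomplex $L$ if all its nonzero coefficients are on simplices of $L$. *)

(* Defs.v *)
From HB Require Import structures.
From mathcomp Require Import all_boot all_order all_algebra.
Set Implicit Arguments. Unset Strict Implicit. Unset Printing Implicit Defensive.
Import Order.TTheory GRing.Theory Num.Theory.
Local Open Scope ring_scope.

Definition delta_complex (S : finType) (dim : S -> nat) (face : S -> nat -> S) :=
  (forall s i, (0 < dim s)%N -> (i <= dim s)%N -> dim (face s i) = (dim s).-1)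
  /\ (forall s i j, (2 <= dim s)%N -> (i < j)%N -> (j <= dim s)%N ->
        face (face s j) i = face (face s i) j.-1).

Definition facet (S : finType) (dim : S -> nat) (face : S -> nat -> S) : rel S :=
  fun s t => (0 < dim s)%N && [exists i : 'I_(dim s).+1, face s i == t].

Definition proper_face (S : finType) (dim : S -> nat) (face : S -> nat -> S)
    (t s : S) : bool :=
  (t != s) && connect (facet dim face) s t.

Definition interval_filtration (S : finType) (dim : S -> nat) (face : S -> nat -> S)
    (mn mx : S -> int) :=
  [/\ forall s, mn s < mx s,
      forall t s, proper_face dim face t s ->
        [/\ mn t < mn s, mn s < mx s & mx s < mx t],
      injective mn
    & injective mx].

Definition bd (F : fieldType) (S : finType) (dim : S -> nat) (face : S -> nat -> S)
    (s t : S) : F :=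
  if dim s == 0%N then 0
  else \sum_(i < (dim s).+1) (-1) ^+ i * (face s i == t)%:R.

(* The cone omega * K.  Simplices: Some (false, s) = base simplex s,    *)
(* None = the apex omega, Some (true, s) = cone simplex omega * s.      *)
Definition cone_simplex (S : finType) : finType := option (bool * S)%type.

Definition Base (S : finType) (s : S) : cone_simplex S := Some (false, s).
Definition Omega (S : finType) : cone_simplex S := None.
Definition Cone (S : finType) (s : S) : cone_simplex S := Some (true, s).

(* cbd y x = coefficient of x in the boundary of y, with
   d(omega*s) = s - omega*(d s), and d(omega*v) = v - omega for a vertex v. *)
Definition cbd (F : fieldType) (S : finType) (dim : S -> nat) (face : S -> nat -> S)
    (y x : cone_simplex S) : F :=
  match y, x with
  | Some (false, s), Some (false, t) => @bd F _ dim face s t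
  | Some (true, s), Some (false, t) => (t == s)%:R
  | Some (true, s), None => if dim s == 0%N then -1 else 0
  | Some (true, s), Some (true, t) => - @bd F _ dim face s t
  | _, _ => 0
  end.

(* Boundary matrix D of the cone: D x y = entry in row x, column y. *)
Definition Dmat (F : fieldType) (S : finType) (dim : S -> nat) (face : S -> nat -> S)
    (x y : cone_simplex S) : F := @cbd F _ dim face y x.

Definition cone_le (S : finType) (mn mx : S -> int) (x y : cone_simplex S) : bool :=
  match x, y with
  | Some (false, s), Some (false, t) => mn s <= mn t
  | Some (false, _), _ => true
  | None, Some (false, _) => false
  | None, _ => true
  | Some (true, s), Some (true, t) => mx t <= mx s
  | Some (true, _), _ => false
  end.

Definition cone_lt (S : finType) (mn mx : S -> int) (x y : cone_simplex S) : bool :=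
  cone_le mn mx x y && (x != y).

Definition cmatrix (F : fieldType) (S : finType) := cone_simplex S -> cone_simplex S -> F.

Definition cmul (F : fieldType) (S : finType) (A B : cmatrix F S) : cmatrix F S :=
  fun x y => \sum_(z : cone_simplex S) A x z * B z y.

Definition cid (F : fieldType) (S : finType) : cmatrix F S :=
  fun x y => (x == y)%:R.

Definition upper_triangular (F : fieldType) (S : finType) (mn mx : S -> int)
    (V : cmatrix F S) :=
  forall x y, cone_lt mn mx y x -> V x y = 0.

Definition invertible (F : fieldType) (S : finType) (V : cmatrix F S) :=
  exists W : cmatrix F S, cmul V W = @cid F S /\ cmul W V = @cid F S.

Definition is_low (F : fieldType) (S : finType) (mn mx : S -> int)
    (R : cmatrix F S) (y x : cone_simplex S) :=
  R x y != 0 /\ forall x', cone_lt mn mx x x' -> R x' y = 0.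

Definition reduced (F : fieldType) (S : finType) (mn mx : S -> int) (R : cmatrix F S) :=
  forall y1 y2 x, is_low mn mx R y1 x -> is_low mn mx R y2 x -> y1 = y2.

Definition RDV_decomposition (F : fieldType) (S : finType) (dim : S -> nat)
    (face : S -> nat -> S) (mn mx : S -> int) (R V : cmatrix F S) :=
  [/\ R = cmul (@Dmat F _ dim face) V,
      upper_triangular mn mx V,
      invertible V
    & reduced mn mx R].

Definition restr_cone (F : fieldType) (S : finType) (V : cmatrix F S)
    (y : cone_simplex S) : cone_simplex S -> F :=
  fun x => match x with Some (true, _) => V x y | _ => 0 end.

Definition cone_chain_bd (F : fieldType) (S : finType) (dim : S -> nat)
    (face : S -> nat -> S) (c : cone_simplex S -> F) : cone_simplex S -> F :=
  fun x => \sum_(y : cone_simplex S) @cbd F _ dim face y x * c y.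

Definition restr_base (F : fieldType) (S : finType) (c : cone_simplex S -> F) : S -> F :=
  fun t => c (Base t).

Definition chain_bd (F : fieldType) (S : finType) (dim : S -> nat)
    (face : S -> nat -> S) (c : S -> F) : S -> F :=
  fun t => \sum_(s : S) @bd F _ dim face s t * c s.

Definition supported_ge (F : fieldType) (S : finType) (mx : S -> int) (c : S -> F) (j : int) :=
  forall t, c t != 0 -> j <= mx t.

(* Main.v *)
Require Import Defs.
From HB Require Import structures.
From mathcomp Require Import all_boot all_order all_algebra.
Import Order.TTheory GRing.Theory Num.Theory.
Local Open Scope ring_scope.

Lemma cle_trans {S : finType} {mn mx : S -> int} {x y z} :
  cone_le mn mx x y -> cone_le mn mx y z -> cone_le mn mx x z.
Proof.
by case: x => [[[] s]|]; case: y => [[[] t]|]; case: z => [[[] u]|] //=;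
  move=> h1 h2; solve [exact: le_trans h1 h2 | exact: le_trans h2 h1].
Qed.

Lemma cle_anti {S : finType} {mn mx : S -> int} {x y} :
  injective mn -> injective mx ->
  cone_le mn mx x y -> cone_le mn mx y x -> x = y.
Proof.
move=> imn imx.
case: x => [[[] s]|]; case: y => [[[] t]|] //= h1 h2.
- by congr (Some (_, _)); apply: imx; apply/eqP; rewrite eq_le h1 h2.
- by congr (Some (_, _)); apply: imn; apply/eqP; rewrite eq_le h1 h2.
Qed.

Lemma cle_total (S : finType) (mn mx : S -> int) x y :
  cone_le mn mx x y || cone_le mn mx y x.
Proof.
by case: x => [[[] s]|]; case: y => [[[] t]|] //=; exact: le_total.
Qed.

Lemma clt_trans {S : finType} {mn mx : S -> int} {x y z} :
  injective mn -> injective mx ->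
  cone_lt mn mx x y -> cone_lt mn mx y z -> cone_lt mn mx x z.
Proof.
move=> imn imx /andP [h1 n1] /andP [h2 n2].
rewrite /cone_lt (cle_trans h1 h2) /=; apply/eqP => e.
subst z. by move: n1; rewrite (cle_anti imn imx h1 h2) eqxx.
Qed.

Lemma clt_irr {S : finType} {mn mx : S -> int} {x} : ~~ cone_lt mn mx x x.
Proof. by rewrite /cone_lt eqxx andbF. Qed.

Lemma clt_total {S : finType} {mn mx : S -> int} {x y} :
  x != y -> cone_lt mn mx x y || cone_lt mn mx y x.
Proof.
move=> nxy; rewrite /cone_lt nxy eq_sym nxy !andbT; exact: cle_total.
Qed.

Lemma diag_nz {F : fieldType} {S : finType} {mn mx : S -> int} {V W : cmatrix F S} :
  injective mn -> injective mx ->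
  upper_triangular mn mx V -> cmul W V = @cid F S ->
  forall y, V y y != 0 /\ forall x, cone_lt mn mx y x -> W x y = 0.
Proof.
move=> imn imx HU HWV.
have step : forall y, (forall z, cone_lt mn mx z y ->
      V z z != 0 /\ forall x, cone_lt mn mx z x -> W x z = 0) ->
    V y y != 0 /\ forall x, cone_lt mn mx y x -> W x y = 0.
  move=> y IH.
  have key : forall x, x = y \/ cone_lt mn mx y x -> (x == y)%:R = W x y * V y y.
    move=> x hx.
    have := congr1 (fun M => M x y) HWV; rewrite /cmul /cid => <-.
    rewrite (bigD1 y) //= big1 ?addr0 // => z nzy.
    case: (boolP (cone_lt mn mx z y)) => hzy.
    - have [_ ->] := IH z hzy; first by rewrite mul0r.
      by case: hx => [->|hyx] //; exact: clt_trans hzy hyx.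
    - have := clt_total (mn:=mn) (mx:=mx) nzy; rewrite (negbTE hzy) /= => hyz.
      by rewrite HU ?mulr0.
  have hy := key y (or_introl erefl); rewrite eqxx in hy.
  have nz : V y y != 0.
    by apply/eqP => e; move: hy; rewrite e mulr0; move/eqP; rewrite oner_eq0.
  split=> // x hyx.
  have := key x (or_intror hyx).
  have -> : (x == y) = false.
    by apply/negbTE; apply/eqP => e; subst x; move: hyx; rewrite (negbTE clt_irr).
  move/esym/eqP; rewrite mulf_eq0 (negbTE nz) orbF; by move/eqP.
suff H : forall n y, (#|[set w | cone_lt mn mx w y]| < n)%N ->
    V y y != 0 /\ forall x, cone_lt mn mx y x -> W x y = 0.
  by move=> y; exact: (H _ y (ltnSn _)).
elim=> [//|n IH] y Hy.
apply: step => z hzy; apply: IH.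
have hp : (#|[set w | cone_lt mn mx w z]| < #|[set w | cone_lt mn mx w y]|)%N.
  apply: proper_card; apply/properP; split.
    by apply/subsetP => w; rewrite !inE => hw; exact: clt_trans hw hzy.
  by exists z; rewrite !inE // clt_irr.
by apply: leq_trans hp _; rewrite -ltnS.
Qed.

Lemma sum_cone {F : fieldType} {S : finType} {f : cone_simplex S -> F} :
  (forall y, (forall s, y != Cone s) -> f y = 0) ->
  \sum_y f y = \sum_(s : S) f (Cone s).
Proof.
move=> H.
rewrite (bigID (fun y => y \in [set Cone s | s in [set: S]])) /=.
rewrite [X in _ + X]big1 ?addr0.
  rewrite big_imset /=; first by apply: eq_bigl => s; rewrite inE.
  by move=> x y _ _ [].
move=> y hy; apply: H => s; apply/eqP => e; move: hy; rewrite e.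
by rewrite imset_f ?inE.
Qed.

Theorem claim6p2 (F : fieldType) (S : finType) (dim : S -> nat)
    (face : S -> nat -> S) (mn mx : S -> int)
    (HK : delta_complex dim face)
    (Hfilt : interval_filtration dim face mn mx)
    (R V : cmatrix F S)
    (HRDV : RDV_decomposition dim face mn mx R V)
    (sigma tau : S)
    (Hpair : is_low mn mx R (Cone tau) (Cone sigma)) :
  let d := mx sigma in
  let b := mx tau in
  let z := restr_base (cone_chain_bd dim face (restr_cone V (Cone tau))) in
  [/\ supported_ge mx z b,
      supported_ge mx (chain_bd dim face z) d,
      z tau != 0
    & chain_bd dim face z sigma != 0].
Proof.
move=> d b z.
case: HRDV => HR HU [W [HVW HWV]] _.
case: Hfilt => _ _ imn imx.
have Hz : forall t, z t = V (Cone t) (Cone tau).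
  move=> t; rewrite /z /restr_base /cone_chain_bd (bigD1 (Cone t)) //=.
  rewrite eqxx mul1r big1 ?addr0 // => -[[[] s]|] //= hne.
  - have -> : (t == s) = false.
      by apply/negbTE; apply/eqP => e; subst s; rewrite eqxx in hne.
    by rewrite mul0r.
  - by rewrite mulr0.
  - by rewrite mul0r.
have HRc : forall t, R (Cone t) (Cone tau) = - chain_bd dim face z t.
  move=> t; rewrite HR /cmul /Dmat /chain_bd -sumrN.
  rewrite (sum_cone (f := fun y => @cbd F S dim face y (Cone t) * V y (Cone tau))).
    by apply: eq_bigr => s _; rewrite Hz /= mulNr.
  move=> [[[] s]|] //= hy; last by rewrite mul0r.
  - by have := hy s; rewrite eqxx.
  - by rewrite mul0r.
split.
- move=> t; rewrite Hz => hne; case: (leP b (mx t)) => // hlt.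
  move: hne; rewrite HU ?eqxx //.
  rewrite /cone_lt /Cone /= (ltW hlt) /=; apply/eqP => -[e].
  by subst t; rewrite ltxx in hlt.
- move=> t hne; case: (leP d (mx t)) => // hlt.
  move: hne; rewrite -[X in X != 0]opprK -HRc (proj2 Hpair) ?oppr0 ?eqxx //.
  rewrite /cone_lt /Cone /= (ltW hlt) /=; apply/eqP => -[e].
  by subst t; rewrite ltxx in hlt.
- by rewrite Hz; exact: (diag_nz imn imx HU HWV (Cone tau)).1.
- by rewrite -[X in X != 0]opprK -HRc oppr_eq0; exact: Hpair.1.
Qed.
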